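(* Let $\Delta$ be a pure simplicial complex of dimension $m-1\ge2$ whose clique decomposition $\Delta=\Delta_1\cup\cdots\cup\Delta_r$ satisfies conditions (i) and (ii), such that each clique is a single $(m-1)$-simplex and $G_\Delta$ is the complete graph $K_r$. Then $\Delta$ is closed if and only if $m\ge r$.
   Context: $\Delta$ is a pure $(m-1)$-dimensional simplicial complex on $[n]$. Clique decomposition: let $\mathcal{S}$ be the set of simplices $\Gamma$ with vertices in $[n]$, $\dim\Gamma\ge m-1$, whose $(m-1)$-skeleton is contained in $\Delta$; the maximal elements $\Gamma_1,\dots,\Gamma_r$ of $\mathcal{S}$ give the cliques $\Delta_i=\Gamma_i^{(m-1)}$, $\Delta=\Delta_1\cup\cdots\cup\Delta_r$; $V(\Delta_i)$ is the vertex set of $\Delta_i$. Conditions: (i) $|V(\Delta_i)\cap V(\Delta_j)|\le1$ for all $i<j$; (ii) $V(\Delta_i)\cap V(\Delta_j)\cap V(\Delta_k)=\emptyset$ for all $i<j<k$. $G_\Delta$ is the simple graph on vertices $v_1,\dots,v_r$ with an edge $\{v_i,v_j\}$ ($i\ne j$) iff $V(\Delta_i)\cap V(\Delta_j)\ne\emptyset$. $\Delta$ is closed with respect to a labeling of its vertices by $[n]$ if for any two facets $F=\{a_1<\dots<a_m\}$, $G=\{b_1<\dots<b_m\}$ with $a_i=b_i$ for some $i$, every $m$-subset of $F\cup G$ is a facet of $\Delta$; $\Delta$ is closed if some labeling makes it closed. *)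

(* Defs.v *)
From mathcomp Require Import all_boot all_fingroup.
Set Implicit Arguments. Unset Strict Implicit. Unset Printing Implicit Defensive.

(* A pure simplicial complex on [n] = {0,...,n-1} (vertices are 'I_n) is
   represented by its set of facets F : {set {set 'I_n}}; its faces are the
   subsets of facets. *)

Definition is_face n (F : {set {set 'I_n}}) (s : {set 'I_n}) : bool :=
  [exists f in F, s \subset f].

Definition pure_of_dim n (F : {set {set 'I_n}}) (m : nat) : bool :=
  (F != set0) && [forall f in F, #|f| == m].

(* Gamma belongs to the family S: dim Gamma >= m-1 and the (m-1)-skeleton of
   Gamma (all faces of Gamma with at most m vertices) is contained in Delta. *)
Definition in_S n (F : {set {set 'I_n}}) (m : nat) (G : {set 'I_n}) : bool :=
  (m <= #|G|) &&
  [forall s : {set 'I_n}, ((s \subset G) && (#|s| <= m)) ==> is_face F s].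

(* The maximal elements Gamma_1, ..., Gamma_r of S; the vertex set of the
   clique Delta_i = Gamma_i^(m-1) is Gamma_i itself. *)
Definition cliques n (F : {set {set 'I_n}}) (m : nat) : {set {set 'I_n}} :=
  [set G | in_S F m G &&
     [forall H : {set 'I_n}, (in_S F m H && (G \subset H)) ==> (H == G)]].

(* i-th smallest element (0-based) of a set of vertices. *)
Definition kth n (f : {set 'I_n}) (i : nat) : nat :=
  nth 0 (sort leq [seq val x | x <- enum f]) i.

(* Closedness with respect to the given labeling (the natural order on 'I_n). *)
Definition closed_wrt n (F : {set {set 'I_n}}) (m : nat) : Prop :=
  forall f g, f \in F -> g \in F ->
    (exists i, i < m /\ kth f i = kth g i) ->
    forall h : {set 'I_n}, h \subset f :|: g -> #|h| = m -> h \in F.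

Definition relabel n (s : {perm 'I_n}) (F : {set {set 'I_n}}) :
  {set {set 'I_n}} := [set (fun f : {set 'I_n} => [set s x | x in f]) f | f in F].

Definition is_closed n (F : {set {set 'I_n}}) (m : nat) : Prop :=
  exists s : {perm 'I_n}, closed_wrt (relabel s F) m.

(* Main.v *)
Require Import Defs.
From mathcomp Require Import all_boot all_fingroup zify.
Set Implicit Arguments. Unset Strict Implicit. Unset Printing Implicit Defensive.

Lemma card_count n (f : {set 'I_n}) (P : pred 'I_n) :
  #|[set y in f | P y]| = count P (enum f).
Proof.
rewrite cardsE cardE -size_filter /enum_mem -filter_predI.
congr size; apply: eq_filter => x /=. by rewrite andbC.
Qed.
Lemma count_sorted_lt (s : seq nat) j : sorted ltn s -> j < size s ->
  count (fun a => a < nth 0 s j) s = j.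
Proof.
move=> ss js.
rewrite -[s in count _ s](cat_take_drop j) count_cat.
have -> : count (fun a => a < nth 0 s j) (take j s) = j.
  rewrite -[RHS](size_takel (ltnW js)).
  apply/eqP; rewrite -all_count; apply/(all_nthP 0) => k.
  rewrite size_takel ?(ltnW js) // => kj.
  rewrite nth_take //. apply: (sorted_ltn_nth ltn_trans) => //; rewrite inE //.
  exact: ltn_trans kj js.
have -> : count (fun a => a < nth 0 s j) (drop j s) = 0.
  apply/eqP; rewrite -leqn0 leqNgt -has_count; apply/(has_nthP 0) => -[k].
  rewrite size_drop => ks; rewrite nth_drop.
  case: k ks => [|k] ks; first by rewrite addn0 ltnn.
  rewrite ltnNge; apply/negP; apply/negPn. apply: ltnW.
  apply: (sorted_ltn_nth ltn_trans) => //; rewrite ?inE /=; lia.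
by rewrite addn0.
Qed.
Definition srt n (f : {set 'I_n}) := sort leq [seq val x | x <- enum f].
Lemma srt_sorted n (f : {set 'I_n}) : sorted ltn (srt f).
Proof.
by rewrite /srt ltn_sorted_uniq_leq sort_uniq map_inj_uniq ?enum_uniq ?(sort_sorted leq_total) //; exact: val_inj.
Qed.
Lemma rank_count n (f : {set 'I_n}) (x : 'I_n) :
  #|[set y in f | val y < val x]| = count (fun a => a < val x) (srt f).
Proof. by rewrite card_count /srt count_sort count_map. Qed.
Lemma kthE n (f : {set 'I_n}) x : x \in f -> kth f #|[set y in f | val y < val x]| = val x.
Proof.
move=> xf; have xL : val x \in srt f by rewrite mem_sort; apply: map_f; rewrite mem_enum.
rewrite rank_count -{1}(nth_index 0 xL) count_sorted_lt ?index_mem ?srt_sorted //.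
exact: nth_index.
Qed.
Lemma kth_ex n (f : {set 'I_n}) i : i < #|f| ->
  exists2 x, x \in f & (kth f i = val x /\ #|[set y in f | val y < val x]| = i).
Proof.
move=> ifi.
have szL : size (srt f) = #|f| by rewrite /srt size_sort size_map cardE.
have : nth 0 (srt f) i \in srt f by rewrite mem_nth // szL.
rewrite mem_sort => /mapP [y]; rewrite mem_enum => yf ey.
exists y => //; split; first by rewrite /kth -ey.
by rewrite rank_count -ey count_sorted_lt ?srt_sorted ?szL.
Qed.
Definition rk_of n (code : 'I_n -> nat) x := #|[set y | code y < code x]|.
Lemma perm_of_code n (code : 'I_n -> nat) : injective code ->
  exists s : {perm 'I_n}, forall x y, (val (s x) < val (s y)) = (code x < code y).
Proof.
move=> ci.
have rkn x : rk_of code x < n.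
  apply: (@leq_trans #|[set: 'I_n]|); last by rewrite cardsT card_ord.
  apply: proper_card; apply/properP; split; first exact: subsetT.
  by exists x; rewrite ?inE ?ltnn.
have rkmono x y : code x < code y -> rk_of code x < rk_of code y.
  move=> lt; apply: proper_card; apply/properP; split.
    by apply/subsetP => z; rewrite !inE => /ltn_trans; apply.
  by exists x; rewrite ?inE ?ltnn.
have rkE x y : (rk_of code x < rk_of code y) = (code x < code y).
  case: (ltnP (code x) (code y)) => [lt|le]; first exact: rkmono.
  apply/negbTE; rewrite -leqNgt.
  move: le; rewrite leq_eqVlt => /orP [/eqP e| lt].
    rewrite (ci _ _ e); exact: leqnn.
  exact: ltnW (rkmono _ _ lt).
pose rko x : 'I_n := Ordinal (rkn x).
have rkoi : injective rko.
  move=> x y /(congr1 val) e0; have e : rk_of code x = rk_of code y by [].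
  apply: (ci x y); case: (ltngtP (code x) (code y)) => // h.
    by have := rkE x y; rewrite h e ltnn.
  by have := rkE y x; rewrite h e ltnn.
exists (perm rkoi) => x y; rewrite !permE; exact: rkE.
Qed.


Lemma cliquesE n m (F : {set {set 'I_n}}) : pure_of_dim F m ->
  (forall G, G \in cliques F m -> #|G| = m) -> cliques F m = F.
Proof.
case/andP=> _ /forallP Fsz Csz.
have Fs f : f \in F -> #|f| = m by move=> fF; have := Fsz f; rewrite fF => /eqP.
have maxab H : in_S F m H -> exists2 G, G \in cliques F m & H \subset G.
  move=> HS.
  have P0 : in_S F m H && (H \subset H) by rewrite HS subxx.
  case: (@arg_maxnP _ H (fun G : {set 'I_n} => in_S F m G && (H \subset G)) (fun G : {set 'I_n} => #|G|) P0) => G /andP [GS HG] Gmax.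
  exists G => //; rewrite inE GS /=; apply/forallP => K; apply/implyP => /andP [KS GK].
  have := Gmax K; rewrite KS (subset_trans HG GK) => /(_ isT) KG.
  by rewrite eq_sym eqEcard GK; exact: KG.
apply/setP => G; apply/idP/idP => [GC|GF].
  have GS : in_S F m G by move: GC; rewrite inE => /andP [].
  have := Csz _ GC => Gm.
  move: GS => /andP [_ /forallP /(_ G)]; rewrite subxx Gm leqnn /= => /existsP [f /andP [fF Gf]].
  suff Ge : G = f by rewrite Ge.
  by apply/eqP; rewrite eqEcard Gf (Fs f fF) Gm leqnn.
have fS : in_S F m G.
  rewrite /in_S Fs // leqnn /=; apply/forallP => s; apply/implyP => /andP [sG _].
  by apply/existsP; exists G; rewrite GF.
case: (maxab _ fS) => K KC GK.
suff Ge : G = K by rewrite Ge.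
by apply/eqP; rewrite eqEcard GK (Csz _ KC) (Fs _ GF) leqnn.
Qed.


Lemma card1_eq (T : finType) (A : {set T}) x y : #|A| = 1 -> x \in A -> y \in A -> x = y.
Proof.
move/eqP/cards1P => [z ->]; rewrite !inE => /eqP -> /eqP -> //.
Qed.

Lemma pt_ex n (F : {set {set 'I_n}}) f (x0 : 'I_n) :
  (forall g h, g \in F -> h \in F -> g != h -> #|g :&: h| = 1) ->
  (forall g h k, g \in F -> h \in F -> k \in F -> g != h -> g != k -> h != k ->
     g :&: h :&: k = set0) ->
  f \in F ->
  exists pt : {set 'I_n} -> 'I_n,
    (forall h, h \in F -> h != f -> pt h \in h :&: f) /\
    (forall h1 h2, h1 \in F -> h2 \in F -> h1 != f -> h2 != f -> pt h1 = pt h2 -> h1 = h2).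
Proof.
move=> Hi Hii fF.
pose pt h := odflt x0 [pick x in h :&: f].
have pth h : h \in F -> h != f -> pt h \in h :&: f.
  move=> hF hf; rewrite /pt; case: pickP => [x -> //|none].
  have := Hi h f hF fF hf.
  rewrite (_ : h :&: f = set0) ?cards0 //.
  by apply/setP => x; rewrite in_set0; have := none x; rewrite /= => ->.
exists pt; split => // h1 h2 h1F h2F h1f h2f e.
apply/eqP; apply/negPn/negP => h12.
have := Hii h1 h2 f h1F h2F fF h12 h1f h2f.
move/setP/(_ (pt h1)); rewrite !inE.
have := pth h1 h1F h1f; have := pth h2 h2F h2f; rewrite !inE -e.
by move=> /andP [-> ->] /andP [-> _].
Qed.

Lemma relabel_mem n (s : {perm 'I_n}) (F : {set {set 'I_n}}) f : f \in F -> [set s x | x in f] \in relabel s F.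
Proof. by move=> fF; apply/imsetP; exists f. Qed.

Lemma relabel_inv n (s : {perm 'I_n}) (F : {set {set 'I_n}}) h : h \in relabel s F -> exists2 f, f \in F & h = [set s x | x in f].
Proof. by move/imsetP. Qed.

Lemma stepA n m (F : {set {set 'I_n}}) (s : {perm 'I_n}) :
  3 <= m -> F != set0 -> (forall f, f \in F -> #|f| = m) ->
  (forall g h, g \in F -> h \in F -> g != h -> #|g :&: h| = 1) ->
  (forall g h k, g \in F -> h \in F -> k \in F -> g != h -> g != k -> h != k ->
     g :&: h :&: k = set0) ->
  closed_wrt (relabel s F) m -> #|F| <= m.
Proof.
move=> m3 F0 Fs Hi Hii cl; rewrite leqNgt; apply/negP => mF.
have allsh f v : f \in F -> v \in f -> exists2 g, g \in F & (g != f) && (v \in g).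
  move=> fF vf; case: (pt_ex v Hi Hii fF) => pt [pth ptinj].
  have sub : pt @: (F :\ f) \subset f.
    apply/subsetP => x /imsetP [h]; rewrite !inE => /andP [hf hF] ->.
    by have := pth h hF hf; rewrite inE => /andP [].
  have cardpt : #|pt @: (F :\ f)| = #|F :\ f|.
    by apply: card_in_imset => h1 h2; rewrite !inE => /andP[? ?] /andP[? ?]; exact: ptinj.
  have : pt @: (F :\ f) == f.
    rewrite eqEcard sub cardpt (Fs f fF) /=; have := cardsD1 f F; rewrite fF add1n => e; rewrite -ltnS -e; exact: mF.
  move/eqP => E; have : v \in pt @: (F :\ f) by rewrite E.
  move=> /imsetP [h]; rewrite !inE => /andP [hf hF] ->.
  exists h => //; apply/andP; split => //; have := pth h hF hf; rewrite inE => /andP [] //.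
have [f0 f0F] : exists f0, f0 \in F by apply/set0Pn.
have [x0 x0f0] : exists x0, x0 \in f0 by apply/set0Pn; rewrite -card_gt0 (Fs f0 f0F); lia.
pose U := [set y | [exists k in F, y \in k]].
have x0U : x0 \in U by rewrite inE; apply/existsP; exists f0; rewrite f0F.
have [u vU vmin] := @arg_minnP _ x0 (fun x => x \in U) (fun x => val (s x)) x0U.
move: (vU); rewrite inE => /existsP [f /andP [fF vf]].
case: (allsh f u fF vf) => g gF /andP [gf vg].
have rank0 h : h \in F -> u \in h -> kth [set s x | x in h] 0 = val (s u).
  move=> hF vh.
  have := kthE (imset_f s vh).
  rewrite (_ : [set y in [set s x | x in h] | val y < val (s u)] = set0) ?cards0 //.
  apply/setP => y; rewrite !inE; apply/negbTE; apply/andP => -[/imsetP [w wh ->]].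
  have wU : w \in U by rewrite inE; apply/existsP; exists h; rewrite hF.
  by have := vmin w wU; rewrite ltnNge => ->.
have [a af av] : exists2 a, a \in f & a != u.
  have : 0 < #|f :\ u| by have := cardsD1 u f; rewrite vf (Fs f fF); move: #|f :\ u| => k e; clear -e m3; lia.
  by rewrite card_gt0 => /set0Pn [a]; rewrite !inE => /andP [? ?]; exists a.
have [b bg bf] : exists2 b, b \in g & b \notin f.
  have : 0 < #|g :\: f| by have := cardsID f g; rewrite (Fs g gF) (Hi g f gF fF gf); move: #|g :\: f| => k e; clear -e m3; lia.
  by rewrite card_gt0 => /set0Pn [b]; rewrite !inE => /andP [? ?]; exists b.
pose h0 := b |: (f :\ a).
have h0m : #|h0| = m.
  rewrite cardsU1 !inE (negbTE bf) andbF /=; have := cardsD1 a f; rewrite af (Fs f fF); move: #|f :\ a| => k e; clear -e; lia.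
have h0sub : h0 \subset f :|: g.
  apply/subsetP => x; rewrite !inE => /orP [/eqP -> | /andP [_ ->]] //; by rewrite bg orbT.
have h0F : h0 \in F.
  have := cl _ _ (relabel_mem s fF) (relabel_mem s gF).
  move=> /(_ (ex_intro _ 0 (conj (ltn_trans (isT : 0 < 2) m3) (etrans (rank0 f fF vf) (esym (rank0 g gF vg)))))).
  move=> /(_ [set s x | x in h0]).
  rewrite -imsetU (imsetS _ h0sub) card_imset ?h0m; last exact: perm_inj.
  move=> /(_ isT erefl) /relabel_inv [h1 h1F /(imset_inj (@perm_inj _ s)) ->] //.
have h0f : h0 != f by apply/negP => /eqP e; move: bf; rewrite -e !inE eqxx.
have := Hi h0 f h0F fF h0f.
have : f :\ a \subset h0 :&: f.
  apply/subsetP => x; rewrite !inE => /andP [xa xf]; by rewrite xa xf orbT.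
move/subset_leq_card; have := cardsD1 a f; rewrite af (Fs f fF).
move: #|f :\ a| #|h0 :&: f| => k1 k2 e1 e2 e3; clear -e1 e2 e3 m3; lia.
Qed.


Definition jdx n (h : {set 'I_n}) : nat := #|{set 'I_n}| - enum_rank h.
Lemma jdx_le n (h : {set 'I_n}) : jdx h <= #|{set 'I_n}|.
Proof. exact: leq_subr. Qed.
Lemma jdx_inj n : injective (@jdx n).
Proof.
move=> h1 h2 e; apply: enum_rank_inj; apply: ord_inj.
have l1 := ltn_ord (enum_rank h1); have l2 := ltn_ord (enum_rank h2).
rewrite -(subKn (ltnW l1)) -(subKn (ltnW l2)); congr (_ - _); exact: e.
Qed.
Definition dd n (F : {set {set 'I_n}}) (x : 'I_n) := \max_(h in F | x \in h) jdx h.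
Lemma dd_ge n (F : {set {set 'I_n}}) x h : h \in F -> x \in h -> jdx h <= dd F x.
Proof. by move=> hF xh; apply: (@leq_bigmax_cond _ _ (@jdx n) h); rewrite hF xh. Qed.
Lemma dd_le n (F : {set {set 'I_n}}) x : dd F x <= #|{set 'I_n}|.
Proof. by apply/bigmax_leqP => h _; exact: jdx_le. Qed.
Lemma dd_eq n (F : {set {set 'I_n}}) x h : h \in F -> x \in h ->
  exists2 h0, (h0 \in F) && (x \in h0) & dd F x = jdx h0.
Proof.
move=> hF xh.
have -> : dd F x = \max_(k in [set k in F | x \in k]) jdx k.
  by apply: eq_bigl => k; rewrite inE.
have c0 : 0 < #|[set k in F | x \in k]|.
  by rewrite card_gt0; apply/set0Pn; exists h; rewrite inE hF xh.
case: (eq_bigmax_cond (@jdx n) c0) => h0; rewrite inE => h0P ->.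
by exists h0.
Qed.
Definition shared n (F : {set {set 'I_n}}) (x : 'I_n) : bool :=
  [exists h1 in F, exists h2 in F, (h1 != h2) && (x \in h1) && (x \in h2)].
Definition key n (F : {set {set 'I_n}}) (x : 'I_n) : nat :=
  2 * (#|{set 'I_n}| - dd F x) + shared F x.
Definition code n (F : {set {set 'I_n}}) (x : 'I_n) : nat := key F x * n + val x.
Lemma code_inj n (F : {set {set 'I_n}}) : injective (code F).
Proof.
move=> x y e; apply: ord_inj.
have := congr1 (modn^~ n) e; rewrite /code /= !modnMDl !modn_small //.
Qed.
Lemma code_lt n (F : {set {set 'I_n}}) w v : key F w < key F v -> code F w < code F v.
Proof.
rewrite /code => lt; have wn : val w < n := ltn_ord w; have vn : val v < n := ltn_ord v.
move: (key F w) (key F v) (val w) (val v) lt wn vn => a b c d ab cn dn.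
have := leq_mul ab (leqnn n); rewrite mulSn; move: (a * n) (b * n) => p q; clear -dn cn; lia.
Qed.
Lemma code_le n (F : {set {set 'I_n}}) w v : code F w < code F v -> key F w <= key F v.
Proof.
move=> lt; rewrite leqNgt; apply/negP => /code_lt lt2.
by have := ltn_trans lt lt2; rewrite ltnn.
Qed.


Lemma two_only n (F : {set {set 'I_n}}) f g h x :
  (forall g h k, g \in F -> h \in F -> k \in F -> g != h -> g != k -> h != k ->
     g :&: h :&: k = set0) ->
  f \in F -> g \in F -> h \in F -> f != g -> x \in f -> x \in g -> x \in h ->
  (h == f) || (h == g).
Proof.
move=> Hii fF gF hF fg xf xg xh; apply/negPn/negP => /norP [hf hg].
have := Hii f g h fF gF hF fg; rewrite eq_sym hf eq_sym hg => /(_ isT isT).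
by move/setP/(_ x); rewrite !inE xf xg xh.
Qed.

Lemma notshared n (F : {set {set 'I_n}}) x h1 h2 :
  ~~ shared F x -> h1 \in F -> h2 \in F -> x \in h1 -> x \in h2 -> h1 = h2.
Proof.
move=> ns h1F h2F x1 x2; apply/eqP; apply/negPn/negP => h12; move/negP: ns; apply.
apply/existsP; exists h1; rewrite h1F /=; apply/existsP; exists h2; by rewrite h2F h12 x1 x2.
Qed.

Lemma sharedI n (F : {set {set 'I_n}}) x h1 h2 :
  h1 \in F -> h2 \in F -> h1 != h2 -> x \in h1 -> x \in h2 -> shared F x.
Proof.
move=> h1F h2F h12 x1 x2.
apply/existsP; exists h1; rewrite h1F /=; apply/existsP; exists h2; by rewrite h2F h12 x1 x2.
Qed.

Lemma coreB n m (F : {set {set 'I_n}}) f g v :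
  (forall f, f \in F -> #|f| = m) ->
  (forall g h, g \in F -> h \in F -> g != h -> #|g :&: h| = 1) ->
  (forall g h k, g \in F -> h \in F -> k \in F -> g != h -> g != k -> h != k ->
     g :&: h :&: k = set0) ->
  #|F| <= m -> f \in F -> g \in F -> f != g -> v \in f -> v \in g -> jdx g < jdx f ->
  #|[set w in g | code F w < code F v]| < #|[set w in f | code F w < code F v]|.
Proof.
move=> Fs Hi Hii Fm fF gF fg vf vg gltf.
have jfN := jdx_le f.
have ddv : dd F v = jdx f.
  apply/eqP; rewrite eqn_leq dd_ge // andbT.
  case: (dd_eq fF vf) => h0 /andP [h0F vh0] ->.
  case/orP: (two_only Hii fF gF h0F fg vf vg vh0) => /eqP -> //; exact: ltnW.
have keyv : key F v = 2 * (#|{set 'I_n}| - jdx f) + 1.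
  by rewrite /key ddv (sharedI fF gF fg vf vg).
pose H := [set h in F | jdx f < jdx h].
have [ptg [ptgh ptginj]] := pt_ex v Hi Hii gF.
have A_le : #|[set w in g | code F w < code F v]| <= #|H|.
  apply: (leq_trans _ (leq_imset_card ptg H)); apply: subset_leq_card.
  apply/subsetP => w; rewrite inE => /andP [wg lt].
  have kl := code_le lt.
  case sw : (shared F w); last first.
    exfalso.
    have ddw : dd F w = jdx g.
      case: (dd_eq gF wg) => h0 /andP [h0F wh0] ->.
      by rewrite (notshared (negbT sw) h0F gF wh0 wg).
    move: kl; rewrite keyv /key ddw sw.
    move: (jdx f) (jdx g) (#|{set 'I_n}|) gltf jfN => a b N; clear; lia.
  case/existsP: sw => h1 /andP [h1F /existsP [h2 /andP [h2F /andP [/andP [h12 w1] w2]]]].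
  have [h [hF hg wh]] : exists h, [/\ h \in F, h != g & w \in h].
    case: (eqVneq h1 g) => [e|h1g]; last by exists h1.
    by exists h2; split => //; rewrite -e eq_sym.
  have ddwN := dd_le F w.
  have jfdw : jdx f <= dd F w.
    move: kl; rewrite keyv /key.
    move: (dd F w) (jdx f) (#|{set 'I_n}|) (nat_of_bool (shared F w)) ddwN jfN => a b N c; clear; lia.
  have hf : h != f.
    apply/negP => /eqP ehf; move: wh; rewrite ehf => wf.
    have wv : w = v by apply: (card1_eq (Hi f g fF gF fg)); rewrite inE ?wf ?wg ?vf ?vg.
    by move: lt; rewrite wv ltnn.
  have jfh : jdx f < jdx h.
    case: (dd_eq gF wg) => h0 /andP [h0F wh0] ddw.
    rewrite ltn_neqAle; apply/andP; split.
      by apply/negP => /eqP /jdx_inj ehf; move: hf; rewrite ehf eqxx.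
    have gh : g != h by rewrite eq_sym.
    case/orP: (two_only Hii gF hF h0F gh wg wh wh0) => /eqP e0.
      by move: jfdw; rewrite ddw e0 leqNgt gltf.
    by move: jfdw; rewrite ddw e0.
  apply/imsetP; exists h; first by rewrite inE hF jfh.
  have := ptgh h hF hg => pin.
  apply: (card1_eq (Hi h g hF gF hg)) => //; by rewrite inE wh wg.
have [ptf [ptfh ptfinj]] := pt_ex v Hi Hii fF.
have [p pf pnot] : exists2 p, p \in f & p \notin ptf @: (F :\ f).
  apply/subsetPn; apply/negP => /subset_leq_card.
  have := leq_imset_card ptf (F :\ f); have := cardsD1 f F; rewrite fF (Fs f fF).
  move: #|F :\ f| #|ptf @: (F :\ f)| #|F| Fm => a b c; clear; lia.
have pprivate h : h \in F -> p \in h -> h = f.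
  move=> hF ph; apply/eqP/negPn/negP => hf; move/negP: pnot; apply.
  apply/imsetP; exists h; first by rewrite !inE hf hF.
  have := ptfh h hF hf => pin.
  apply: (card1_eq (Hi h f hF fF hf)) => //; by rewrite inE ph pf.
have psh : ~~ shared F p.
  apply/negP => /existsP [h1 /andP [h1F /existsP [h2 /andP [h2F /andP [/andP [h12 p1] p2]]]]].
  by move: h12; rewrite (pprivate h1 h1F p1) (pprivate h2 h2F p2) eqxx.
have ddp : dd F p = jdx f.
  by case: (dd_eq fF pf) => h0 /andP [h0F ph0] ->; rewrite (pprivate h0 h0F ph0).
have keyp : key F p = 2 * (#|{set 'I_n}| - jdx f) by rewrite /key ddp (negbTE psh) addn0.
have HF h : h \in H -> (h \in F) && (h != f).
  rewrite inE => /andP [-> jl] /=; apply/negP => /eqP e; by move: jl; rewrite e ltnn.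
have ptfH : {in H &, injective ptf}.
  move=> h1 h2 /HF /andP [h1F h1f] /HF /andP [h2F h2f]; exact: ptfinj.
have Bsub : p |: ptf @: H \subset [set w in f | code F w < code F v].
  apply/subsetP => x; rewrite !inE => /orP [/eqP -> | /imsetP [h hH ->]].
    by rewrite pf /=; apply: code_lt; rewrite keyp keyv addn1.
  have /andP [hF hf] := HF h hH.
  have := ptfh h hF hf; rewrite inE => /andP [wh wf]; rewrite wf /=.
  apply: code_lt; rewrite keyv /key.
  have := dd_ge hF wh; have := dd_le F (ptf h); have := leq_b1 (shared F (ptf h)).
  move: hH; rewrite inE => /andP [_ jl].
  move: (dd F (ptf h)) (nat_of_bool (shared F (ptf h))) (jdx h) (jdx f) (#|{set 'I_n}|) jl => a b c d N; clear; lia.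
have pnotH : p \notin ptf @: H.
  apply/negP => /imsetP [h hH ph]; have /andP [hF hf] := HF h hH.
  have := ptfh h hF hf; rewrite -ph inE => /andP [pinh _].
  by move: hf; rewrite (pprivate h hF pinh) eqxx.
have := subset_leq_card Bsub; rewrite cardsU1 pnotH (card_in_imset ptfH) add1n => HB.
exact: leq_ltn_trans A_le HB.
Qed.

Lemma rank_relabel n (F : {set {set 'I_n}}) (s : {perm 'I_n}) (f : {set 'I_n}) v :
  (forall x y, (val (s x) < val (s y)) = (code F x < code F y)) ->
  #|[set y in [set s x | x in f] | val y < val (s v)]| = #|[set w in f | code F w < code F v]|.
Proof.
move=> sP.
have -> : [set y in [set s x | x in f] | val y < val (s v)] =
          [set s x | x in [set w in f | code F w < code F v]].
  apply/setP => y; apply/idP/idP.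
    rewrite inE => /andP [/imsetP [w wf ->]]; rewrite sP => lt.
    by apply/imsetP; exists w; rewrite // inE wf lt.
  case/imsetP => w; rewrite inE => /andP [wf lt] ->.
  by rewrite inE sP lt andbT; apply: imset_f.
by rewrite card_imset //; exact: perm_inj.
Qed.

Lemma stepB n m (F : {set {set 'I_n}}) :
  (forall f, f \in F -> #|f| = m) ->
  (forall g h, g \in F -> h \in F -> g != h -> #|g :&: h| = 1) ->
  (forall g h k, g \in F -> h \in F -> k \in F -> g != h -> g != k -> h != k ->
     g :&: h :&: k = set0) ->
  #|F| <= m -> is_closed F m.
Proof.
move=> Fs Hi Hii Fm.
have [s sP] := perm_of_code (@code_inj n F).
exists s => _ _ /relabel_inv [f fF ->] /relabel_inv [g gF ->] [i [im ek]] h hsub hm.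
have cf k : k \in F -> #|[set s x | x in k]| = m.
  by move=> kF; rewrite card_imset ?Fs //; exact: perm_inj.
case: (eqVneq f g) => [efg|fg].
  move: hsub; rewrite -efg setUid => hsub.
  suff -> : h = [set s x | x in f] by apply: relabel_mem.
  by apply/eqP; rewrite eqEcard hsub (cf f fF) hm leqnn.
exfalso.
have ilf : i < #|[set s x | x in f]| by rewrite (cf f fF).
have ilg : i < #|[set s x | x in g]| by rewrite (cf g gF).
have [x xf [kx rx]] := kth_ex ilf.
have [y yg [ky ry]] := kth_ex ilg.
have exy : x = y by apply: val_inj; rewrite -kx -ky.
move: yg ry; rewrite -exy => xg ry.
case/imsetP: xf rx ry xg => v vf -> rx ry.
rewrite mem_imset; last exact: perm_inj.
move=> vg; rewrite !(rank_relabel _ _ sP) in rx ry.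
case: (ltngtP (jdx g) (jdx f)) => [gf|fgl|/jdx_inj egf].
- have := coreB Fs Hi Hii Fm fF gF fg vf vg gf; by rewrite rx ry ltnn.
- have gf' : g != f by rewrite eq_sym.
  have := coreB Fs Hi Hii Fm gF fF gf' vg vf fgl; by rewrite rx ry ltnn.
- by move: fg; rewrite egf eqxx.
Qed.


Theorem corollary3p5 (n m : nat) (F : {set {set 'I_n}}) :
  3 <= m ->
  pure_of_dim F m ->
  (* (i) *)
  (forall G1 G2, G1 \in cliques F m -> G2 \in cliques F m -> G1 != G2 ->
     #|G1 :&: G2| <= 1) ->
  (* (ii) *)
  (forall G1 G2 G3, G1 \in cliques F m -> G2 \in cliques F m ->
     G3 \in cliques F m -> G1 != G2 -> G1 != G3 -> G2 != G3 ->
     G1 :&: G2 :&: G3 = set0) ->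
  (* each clique is a single (m-1)-simplex *)
  (forall G, G \in cliques F m -> #|G| = m) ->
  (* G_Delta is the complete graph K_r *)
  (forall G1 G2, G1 \in cliques F m -> G2 \in cliques F m -> G1 != G2 ->
     G1 :&: G2 != set0) ->
  (is_closed F m <-> #|cliques F m| <= m).
Proof.
move=> m3 pure Hi0 Hii Csz Hne.
have CE := cliquesE pure Csz.
rewrite CE in Hi0 Hii Hne *.
have Fs f : f \in F -> #|f| = m.
  move=> fF; case/andP: pure => _ /forallP /(_ f); rewrite fF => /eqP //.
have F0 : F != set0 by case/andP: pure.
have Hi g h : g \in F -> h \in F -> g != h -> #|g :&: h| = 1.
  move=> gF hF gh; apply/eqP; rewrite eqn_leq Hi0 //= card_gt0; exact: Hne.
split => [[s cl]|Fm].
  exact: (stepA m3 F0 Fs Hi Hii cl).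
exact: (stepB Fs Hi Hii Fm).
Qed.
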